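(* Let $(X_1,f_1)$ and $(X_2,f_2)$ be dynamical systems and $h:X_1\to X_2$ a continuous surjection with $h\circ f_1=f_2\circ h$. If $(X_1,f_1)$ satisfies TRAC 1 and TRAC 2 with respect to a background measure $\mu_0$ (with ergodic measures $\mu_1,\dots,\mu_k$), then $(X_2,f_2)$ satisfies TRAC 1 and TRAC 2 with respect to the background measure $h_*\mu_0$ (with ergodic measures $h_*\mu_1,\dots,h_*\mu_k$). If in addition $h$ is almost open and $(X_1,f_1)$ satisfies TRAC 3, then $(X_2,f_2)$ satisfies TRAC 3. If in addition $h$ is $\mu_0$ almost one-to-one and $(X_1,f_1)$ satisfies TRAC 4, then $(X_2,f_2)$ satisfies TRAC 4.
   Context: Dynamical system: compact metric $X$ with continuous $f$. Background measure: a complete full Borel probability measure (full = every nonempty open set has positive measure). Basic sets are chain components of $f$; the basin of a basic set $B$ is $G(B)=\operatorname{int}\{x:\omega f(x)\subset B\}$ ($\omega f(x)$ the limit set of the forward orbit), and $B$ is visible if $G(B)\ne\emptyset$. $Gen(\mu)$ is the set of points $x$ with $\frac1n\sum_{i<n}u(f^ix)\to\int u\,d\mu$ for all continuous $u$; $|\mu|$ is the support. Tractability conditions with respect to $\mu_0$: TRAC 1: finitely many basic sets. TRAC 2: there are finitely many ergodic invariant probability measures $\mu_1,\dots,\mu_k$ such that every point outside some $\mu_0$-null set is generic for some $\mu_i$. TRAC 3: each $|\mu_i|$ is contained in a visible basic set. TRAC 4: for $i\ne j$, $\mu_0(|\mu_i|\cap|\mu_j|)=0$. $h$ is almost open if $h(U)$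 has nonempty interior whenever $U$ does; $h$ is $\mu_0$ almost one-to-one if $\mu_0(\{x:h^{-1}(h(x))=\{x\}\})=1$. *)

(* Defs.v *)
From HB Require Import structures.
From mathcomp Require Import all_boot all_order all_algebra.
From mathcomp Require Import all_classical all_reals all_analysis.

Set Implicit Arguments.
Unset Strict Implicit.
Unset Printing Implicit Defensive.

Import Order.TTheory GRing.Theory Num.Theory.
Import numFieldNormedType.Exports.

Local Open Scope classical_set_scope.
Local Open Scope ring_scope.

Notation borel X := (g_sigma_algebraType (@open X)).

Section dynamics.
Context {R : realType} (X : pseudoPMetricType R).

Definition dyn_system (f : X -> X) : Prop :=
  [/\ hausdorff_space X, compact [set: X] & continuous f].

Definition eps_chain (f : X -> X) (eps : R) (x y : X) : Prop :=
  exists (n : nat) (s : nat -> X),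
    [/\ s 0%N = x, s n.+1 = y & forall i, (i <= n)%N -> ball (f (s i)) eps (s i.+1)].

Definition chain_rel (f : X -> X) (x y : X) : Prop :=
  forall eps : R, 0 < eps -> eps_chain f eps x y.

Definition chain_recurrent (f : X -> X) (x : X) : Prop := chain_rel f x x.

Definition basic_set (f : X -> X) (B : set X) : Prop :=
  exists x, chain_recurrent f x /\
            B = [set y | chain_rel f x y /\ chain_rel f y x].

Definition omega_limit (f : X -> X) (x : X) : set X :=
  \bigcap_(N in [set: nat]) closure [set iter n f x | n in [set n | (N <= n)%N]].

Definition basin (f : X -> X) (B : set X) : set X :=
  interior [set x | omega_limit f x `<=` B].

Definition visible (f : X -> X) (B : set X) : Prop := basin f B !=set0.

Definition support (mu : set (borel X) -> \bar R) : set X :=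
  [set x | forall U : set X, open U -> U x -> (0 < mu U)%E].

Definition full_measure (mu : set (borel X) -> \bar R) : Prop :=
  forall U : set X, open U -> U !=set0 -> (0 < mu U)%E.

Definition probability_measure (mu : set (borel X) -> \bar R) : Prop :=
  mu [set: X] = 1%E.

(* background measure: full Borel probability measure; completeness is
   accounted for by measuring null sets through [negligible]. *)
Definition background_measure (mu : set (borel X) -> \bar R) : Prop :=
  probability_measure mu /\ full_measure mu.

Definition invariant_measure (f : X -> X) (mu : set (borel X) -> \bar R) : Prop :=
  forall A : set (borel X), measurable A -> mu (f @^-1` A) = mu A.

Definition ergodic_measure (f : X -> X) (mu : set (borel X) -> \bar R) : Prop :=
  [/\ probability_measure mu, invariant_measure f mu &
      forall A : set (borel X), measurable A -> f @^-1` A = A ->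
        mu A = 0%E \/ mu A = 1%E].

Definition mean (mu : set (borel X) -> \bar R) (u : X -> R) : R :=
  fine (@integral _ (borel X) R mu [set: borel X] (fun x => (u x)%:E)).

Definition generic (f : X -> X) (mu : set (borel X) -> \bar R) (x : X) : Prop :=
  forall u : X -> R, continuous u ->
    (fun n : nat => (n%:R)^-1 * \sum_(i < n) u (iter i f x)) @ \oo --> mean mu u.

Definition null_set (mu : set (borel X) -> \bar R) (N : set X) : Prop :=
  @negligible _ (borel X) R mu N.

Definition TRAC1 (f : X -> X) : Prop := finite_set (basic_set f).

Definition TRAC2 (f : X -> X) (mu0 : set (borel X) -> \bar R)
    (k : nat) (mus : 'I_k -> set (borel X) -> \bar R) : Prop :=
  (forall i, ergodic_measure f (mus i)) /\
  null_set mu0 (~` [set x | exists i, generic f (mus i) x]).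

Definition TRAC3 (f : X -> X) (k : nat) (mus : 'I_k -> set (borel X) -> \bar R)
  : Prop :=
  forall i, exists B, [/\ basic_set f B, visible f B & support (mus i) `<=` B].

Definition TRAC4 (mu0 : set (borel X) -> \bar R)
    (k : nat) (mus : 'I_k -> set (borel X) -> \bar R) : Prop :=
  forall i j : 'I_k, i != j -> mu0 (support (mus i) `&` support (mus j)) = 0%E.

End dynamics.

Section maps.
Context {R : realType} (X1 X2 : pseudoPMetricType R).

Definition almost_open (h : X1 -> X2) : Prop :=
  forall U : set X1, interior U !=set0 -> interior (h @` U) !=set0.

Definition almost_one_to_one (h : X1 -> X2) (mu0 : set (borel X1) -> \bar R)
  : Prop :=
  null_set mu0 (~` [set x | h @^-1` [set h x] = [set x]]).

Definition push (h : X1 -> X2) (mu : set (borel X1) -> \bar R)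
  : set (borel X2) -> \bar R :=
  fun A => mu (h @^-1` A).

End maps.

(* Main.v *)
Require Import Defs.
From HB Require Import structures.
From mathcomp Require Import all_boot all_order all_algebra.
From mathcomp Require Import all_classical all_reals all_analysis.
From mathcomp Require Import measurable_realfun lebesgue_integral.
From mathcomp Require Import zify ring lra.
Import Order.TTheory GRing.Theory Num.Theory.
Import numFieldNormedType.Exports.
Local Open Scope classical_set_scope.
Local Open Scope ring_scope.
Set Implicit Arguments.
Unset Strict Implicit.
Unset Printing Implicit Defensive.
Lemma minl {R : realType} (a b : R) : Num.min a b <= a.
Proof. by rewrite ge_min lexx. Qed.
Lemma minr {R : realType} (a b : R) : Num.min a b <= b.
Proof. by rewrite ge_min lexx orbT. Qed.

Section chains.
Context {R : realType} (X : pseudoPMetricType R) (f : X -> X).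

Definition chainn (e : R) (n : nat) (a b : X) := exists s : nat -> X,
  [/\ s 0%N = a, s n.+1 = b & forall i, (i <= n)%N -> ball (f (s i)) e (s i.+1)].

Lemma chainnP e a b : eps_chain f e a b <-> exists n, chainn e n a b.
Proof. by split=> -[n [s H]]; exists n, s. Qed.

Lemma chainn_trans e n1 n2 a b c : chainn e n1 a b -> chainn e n2 b c ->
  chainn e (n1 + n2).+1 a c.
Proof.
move=> [s1 [s10 s1n s1s]] [s2 [s20 s2n s2s]].
exists (fun i => if (i <= n1)%N then s1 i else s2 (i - n1.+1)%N); split.
- by rewrite leq0n.
- have -> : ((n1 + n2).+2 <= n1)%N = false by apply/negbTE; rewrite -ltnNge; lia.
  by have -> : ((n1 + n2).+2 - n1.+1 = n2.+1)%N by lia.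
- move=> i Hi; have [H|[H|H]] : (i < n1 \/ n1 < i \/ i = n1)%N by lia.
  + have -> : (i <= n1)%N by lia.
    have -> : (i.+1 <= n1)%N by lia.
    by apply: s1s; lia.
  + have -> : (i <= n1)%N = false by apply/negbTE; rewrite -ltnNge.
    have -> : (i.+1 <= n1)%N = false by apply/negbTE; rewrite -ltnNge; lia.
    have -> : (i.+1 - n1.+1 = (i - n1.+1).+1)%N by lia.
    by apply: s2s; lia.
  + subst i; rewrite leqnn.
    have -> : (n1.+1 <= n1)%N = false by lia.
    by rewrite subnn s20 -s1n; apply: s1s.
Qed.

Lemma chainn_le e e' n a b : e <= e' -> chainn e n a b -> chainn e' n a b.
Proof.
move=> ee [s [s0 sn ss]]; exists s; split => // i Hi.
exact: (le_ball ee (ss _ Hi)).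
Qed.

Lemma chain_trans a b c : chain_rel f a b -> chain_rel f b c -> chain_rel f a c.
Proof.
move=> Hab Hbc e e0.
have /chainnP [n1 H1] := Hab e e0.
have /chainnP [n2 H2] := Hbc e e0.
by apply/chainnP; exists (n1 + n2).+1; apply: chainn_trans H1 H2.
Qed.

Lemma chainn_one e a b : ball (f a) e b -> chainn e 0 a b.
Proof.
move=> H; exists (fun i => if i is 0%N then a else b); split => //.
by move=> i; rewrite leqn0 => /eqP ->.
Qed.

Lemma cont_ball (Y Z : pseudoPMetricType R) (g : Y -> Z) x e :
  continuous g -> 0 < e -> exists2 d, 0 < d & forall y, ball x d y -> ball (g x) e (g y).
Proof.
move=> hg e0.
have := hg x (ball (g x) e) (nbhsx_ballx _ _ e0).
by move=> /nbhs_ballP [d d0 H]; exists d.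
Qed.

Hypothesis fc : continuous f.

Lemma chain_step a b : chain_rel f a b -> chain_rel f b b -> chain_rel f (f a) b.
Proof.
move=> Hab Hbb e e0.
have e20 : 0 < e / 2 by rewrite divr_gt0.
have [d d0 Hd] := cont_ball (f a) fc e20.
have md0 : 0 < Num.min d (e / 2) by rewrite lt_min d0 e20.
have /chainnP [n1 H1] := Hab _ md0.
have /chainnP [n2 H2] := Hbb _ md0.
have [s [s0 sn ss]] := chainn_trans H1 H2.
apply/chainnP; exists (n1 + n2)%N.
exists (fun i => if i is 0%N then f a else s i.+1); split => //.
move=> [|i] Hi.
- have h0 := ss 0%N (leq0n _); rewrite s0 in h0.
  have h1 := ss 1%N (ltn0Sn _).
  have := Hd _ (le_ball (minl d (e/2)) h0) => hh.
  have := ball_triangle hh (le_ball (minr d (e/2)) h1).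
  by rewrite -splitr.
- have := ss i.+2 Hi.
  move/(le_ball (minr d (e/2))) => /(le_ball _); apply.
  by rewrite ler_pdivrMr // ler_peMr // ?ltW //; lra.
Qed.

Lemma chain_iter y : chain_rel f y y -> forall m, chain_rel f (iter m f y) y.
Proof.
move=> Hyy; elim => [//|m IH] /=.
exact: chain_step.
Qed.

Lemma chain_cluster y w : chain_rel f y y ->
  (forall e, 0 < e -> exists m, ball w e (iter m f y)) -> chain_rel f w y.
Proof.
move=> Hyy Hw e e0.
have [d d0 Hd] := cont_ball w fc e0.
have [m Hm] := Hw _ d0.
have /chainnP [n Hn] := chain_iter Hyy m.+1 e0.
apply/chainnP; exists (0 + n).+1; apply: chainn_trans Hn.
exact/chainn_one/Hd.
Qed.

Lemma orbit_chainn e x0 z n : 0 < e -> ball (iter n.+1 f x0) e z -> chainn e n x0 z.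
Proof.
move=> e0 H; exists (fun i => if (i <= n)%N then iter i f x0 else z); split.
- by rewrite leq0n.
- by rewrite ltnn.
- move=> i Hi; rewrite Hi; have [H'|H'] : (i < n \/ i = n)%N by lia.
  + by rewrite H' /=; apply: ballxx.
  + by subst i; rewrite ltnn.
Qed.

Lemma omega_chain x0 z :
  (forall e, 0 < e -> forall N, exists2 m, (N <= m)%N & ball z e (iter m f x0)) ->
  chain_rel f x0 z /\ chain_recurrent f z.
Proof.
move=> Hz; split.
  move=> e e0; have [m m1 Hm] := Hz e e0 1%N.
  apply/chainnP; exists m.-1; apply: orbit_chainn => //.
  by rewrite prednK //; apply: ball_sym.
move=> e e0.
have [d d0 Hd] := cont_ball z fc e0.
have [m _ Hm] := Hz d d0 0%N.
have [m' m'1 Hm'] := Hz e e0 (m.+2).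
apply/chainnP; exists (0 + (m' - m.+2)).+1; apply: chainn_trans.
  exact/(@chainn_one e z (iter m.+1 f x0))/Hd.
apply: orbit_chainn => //.
rewrite -iterD.
have -> : ((m' - m.+2).+1 + m.+1 = m')%N by lia.
exact: ball_sym.
Qed.

End chains.
Section topo.
Context {R : realType}.

Lemma half_le (eta : R) : 0 < eta -> eta / 2 <= eta.
Proof. move=> h; lra. Qed.

Lemma unif_cont (X Y : pseudoPMetricType R) (g : X -> Y) :
  compact [set: X] -> continuous g -> forall e, 0 < e ->
  exists2 d, 0 < d & forall a b, ball a d b -> ball (g a) e (g b).
Proof.
move=> cX gc e e0.
have e20 : 0 < e / 2 by rewrite divr_gt0.
have H : \forall d \near (0:R)^'+,
    [set: X] `<=` (fun a => forall b, ball a d b -> ball (g a) e (g b)).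
  apply: ((compact_near_coveringP _).1 cX R (0:R)^'+
    (fun d a => forall b, ball a d b -> ball (g a) e (g b))) => x _.
  have [eta eta0 Heta] := cont_ball x gc e20.
  have eta20 : 0 < eta / 2 by rewrite divr_gt0.
  near=> x' d => b Hb.
  have Hx' : ball x (eta/2) x' by near: x'; apply: nbhsx_ballx.
  have Hd : d < eta/2 by near: d; apply: nbhs_right_lt.
  have h1 := Heta _ (le_ball (half_le eta0) Hx').
  have h2 : ball x eta b.
    have := ball_triangle Hx' Hb => /le_ball; apply.
    by rewrite /= ; lra.
  have := ball_triangle (ball_sym h1) (Heta _ h2).
  by rewrite -splitr.
near (0:R)^'+ => d.
exists d; first by near: d; exact: nbhs_right_gt.
move=> a b; have : [set: X] `<=` (fun a => forall b, ball a d b -> ball (g a) e (g b)).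
  near: d; apply: filterS H => dd Hdd; exact: Hdd.
by move=> /(_ a Logic.I); apply.
Unshelve. all: by end_near.
Qed.

Lemma cluster_dec (X : pseudoPMetricType R) (T : nat -> set X) :
  compact [set: X] -> (forall n, T n !=set0) ->
  (forall n m, (n <= m)%N -> T m `<=` T n) ->
  exists z, forall n e, 0 < e -> exists y, T n y /\ ball z e y.
Proof.
move=> cX Tne Tdec.
pose F := filter_from [set: nat] T.
have FF : Filter F.
  apply: filter_from_filter; first by exists 0%N.
  move=> i j _ _; exists (maxn i j) => //.
  by move=> x Tx; split; apply: Tdec Tx; rewrite ?leq_maxl ?leq_maxr.
have PF : ProperFilter F by apply: filter_from_proper => i _; exact: Tne.
have [z [_ cz]] := cX F PF (ex_intro2 _ _ 0%N Logic.I (fun x _ => Logic.I)).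
exists z => n e e0.
have [y [Ty bzy]] := cz (T n) (ball z e) (ex_intro2 _ _ n Logic.I (fun x h => h))
  (nbhsx_ballx _ _ e0).
by exists y.
Qed.

End topo.
Lemma invS_le {R : realType} (n m : nat) : (n <= m)%N -> (m.+1%:R^-1 : R) <= n.+1%:R^-1.
Proof. by move=> nm; rewrite lef_pV2 ?posrE ?ltr0n // ler_nat. Qed.

Section factor.
Context {R : realType} (X1 X2 : pseudoPMetricType R) (f1 : X1 -> X1) (f2 : X2 -> X2)
  (h : X1 -> X2).
Hypotheses (cX1 : compact [set: X1]) (hX2 : hausdorff_space X2)
  (f1c : continuous f1) (f2c : continuous f2) (hc : continuous h)
  (hcomm : h \o f1 = f2 \o h) (hsurj : forall y, exists x, h x = y).

Lemma iter_comm m x : h (iter m f1 x) = iter m f2 (h x).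
Proof.
elim: m => [//|m IH] /=.
by rewrite -IH; have := congr1 (fun g => g (iter m f1 x)) hcomm.
Qed.

Lemma chain_h a b : chain_rel f1 a b -> chain_rel f2 (h a) (h b).
Proof.
move=> Hab e e0.
have [d d0 Hd] := unif_cont cX1 hc e0.
have /chainnP [n [s [s0 sn ss]]] := Hab d d0.
apply/chainnP; exists n, (h \o s); split => /=; [by rewrite s0|by rewrite sn|].
move=> i Hi; have := Hd _ _ (ss i Hi).
by have -> : h (f1 (s i)) = f2 (h (s i)) by have := congr1 (fun g => g (s i)) hcomm.
Qed.

Lemma orbit_cluster x0 : exists z, forall e, 0 < e -> forall N,
  exists2 m, (N <= m)%N & ball z e (iter m f1 x0).
Proof.
pose T N := [set iter m f1 x0 | m in [set m | (N <= m)%N]].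
have T1 : forall n, T n !=set0.
  by move=> n; exists (iter n f1 x0); rewrite /T /=; exists n.
have T2 : forall n m, (n <= m)%N -> T m `<=` T n.
  by rewrite /T => n m nm y [k mk <-]; exists k => //=; apply: leq_trans nm mk.
have [z Hz] := cluster_dec cX1 T1 T2.
exists z => e e0 N; have [y [[m Nm <-] bzy]] := Hz N e e0.
by exists m.
Qed.

Definition cls (X : pseudoPMetricType R) (f : X -> X) (x : X) :=
  [set y | chain_rel f x y /\ chain_rel f y x].

Definition Phi (B1 : set X1) : set X2 :=
  [set y | exists b, B1 b /\ chain_rel f2 (h b) y /\ chain_rel f2 y (h b)].

Lemma basic_lift B2 : basic_set f2 B2 -> exists2 B1, basic_set f1 B1 & B2 = Phi B1.
Proof.
move=> [y [yCR ->]].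
have [x0 hx0] := hsurj y.
have [z Hz] := orbit_cluster x0.
have [x0z zCR] := omega_chain f1c Hz.
exists (cls f1 z); first by exists z.
have yhz : chain_rel f2 y (h z) by rewrite -hx0; exact: chain_h.
have hzy : chain_rel f2 (h z) y.
  apply: chain_cluster => // e e0.
  have [d d0 Hd] := cont_ball z hc e0.
  have [m _ Hm] := Hz d d0 0%N.
  by exists m; rewrite -hx0 -iter_comm; apply: Hd.
apply/seteqP; split => y' /=.
  move=> [yy' y'y]; exists z; split; first by split.
  split; [exact: chain_trans hzy yy'|exact: chain_trans y'y yhz].
move=> [b [[zb bz] [hby' y'hb]]]; split.
  apply: chain_trans yhz (chain_trans (chain_h zb) hby').
apply: chain_trans y'hb (chain_trans (chain_h bz) hzy).
Qed.

Lemma trac1_push : TRAC1 f1 -> TRAC1 f2.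
Proof.
move=> fin1; apply: (sub_finite_set _ (finite_image Phi fin1)).
by move=> B2 /basic_lift [B1 bB1 ->]; exists B1.
Qed.


Lemma omega_h x w : omega_limit f2 (h x) w -> exists2 z, omega_limit f1 x z & h z = w.
Proof.
move=> Hw.
pose T N := [set iter m f1 x | m in
  [set m | (N <= m)%N /\ ball w (N.+1%:R^-1) (h (iter m f1 x))]].
have T1 : forall n, T n !=set0.
  move=> n.
  have r0 : 0 < (n.+1%:R^-1 : R) by rewrite invr_gt0 ltr0n.
  have [y [[k nk <-] bw]] := Hw n Logic.I (ball w (n.+1%:R^-1)) (nbhsx_ballx _ _ r0).
  exists (iter k f1 x); exists k => //; split => //.
  by rewrite iter_comm.
have T2 : forall n m, (n <= m)%N -> T m `<=` T n.
  move=> n m nm y [k [mk bk] <-]; exists k => //; split.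
    exact: leq_trans nm mk.
  exact: le_ball (invS_le (R:=R) nm) _ bk.
have [z Hz] := cluster_dec cX1 T1 T2.
exists z.
  move=> N _ B /nbhs_ballP [e e0 He].
  have [y [[m [Nm _] <-] bzy]] := Hz N e e0.
  by exists (iter m f1 x); split; [exists m|apply: He].
apply: hX2 => A B /nbhs_ballP [e1 e10 H1] /nbhs_ballP [e2 e20 H2].
have e0 : 0 < Num.min e1 e2 by rewrite lt_min e10 e20.
have [d d0 Hd] := cont_ball z hc e0.
near \oo => N.
have [y [[m [Nm bm] <-] bzy]] := Hz N d d0.
exists (h (iter m f1 x)); split.
  exact/H1/(le_ball (minl _ _))/Hd.
apply/H2/(le_ball (minr _ _)).
apply: le_ball bm; apply: ltW.
by near: N; exact: (near_infty_natSinv_lt (PosNum e0)).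
Unshelve. all: by end_near.
Qed.

Lemma basic_push x1 : chain_recurrent f1 x1 ->
  basic_set f2 (cls f2 (h x1)) /\ h @` cls f1 x1 `<=` cls f2 (h x1).
Proof.
move=> x1CR; split; first by exists (h x1); split => //; exact: chain_h.
by move=> _ [b [x1b bx1] <-]; split; apply: chain_h.
Qed.

Lemma visible_push x1 : almost_open h -> visible f1 (cls f1 x1) ->
  visible f2 (cls f2 (h x1)).
Proof.
move=> ao /ao; apply: subset_nonempty; apply: interiorS.
move=> _ [x Hx <-] w /omega_h [z /Hx zc <-].
by case: zc => a b; split; apply: chain_h.
Qed.

End factor.
Section meas.
Context {R : realType}.
Local Open Scope ereal_scope.

Lemma open_meas (X : pseudoPMetricType R) (U : set X) : open U -> measurable (U : set (borel X)).
Proof. move=> oU. exact: sub_sigma_algebra. Qed.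
Lemma closed_meas (X : pseudoPMetricType R) (U : set X) : closed U -> measurable (U : set (borel X)).
Proof. move=> cU. rewrite -(setCK U). apply: measurableC. apply: open_meas. exact: closed_openC. Qed.

Lemma cont_mfun (X Y : pseudoPMetricType R) (h : X -> Y) : continuous h ->
  measurable_fun [set: borel X] (h : borel X -> borel Y).
Proof.
move=> hc; apply: (@measurability _ _ (borel X) (borel Y) setT h (@open Y) erefl).
move=> _ [B oB <-]; rewrite setTI; apply: open_meas.
exact: (continuousP _).1 hc _ oB.
Qed.

Lemma meas_pre (X Y : pseudoPMetricType R) (h : X -> Y) : continuous h ->
  forall A : set (borel Y), measurable A -> measurable (h @^-1` A : set (borel X)).
Proof.
move=> hc A mA; have := cont_mfun hc measurableT mA; by rewrite setTI.
Qed.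

Lemma support_closed (X : pseudoPMetricType R) (mu : set (borel X) -> \bar R) :
  closed (Defs.support mu).
Proof.
move=> x clx U oU Ux.
have [y [sy Uy]] := clx U (open_nbhs_nbhs (conj oU Ux)).
exact: sy oU Uy.
Qed.

Lemma addle0 (a b : \bar R) : a = 0 -> b = 0 -> a + b <= 0.
Proof. by move=> -> ->; rewrite adde0. Qed.

Lemma zero_addle (a b c : \bar R) : a = 0 -> b <= c -> a + b <= c.
Proof. by move=> ->; rewrite add0e. Qed.

Lemma null_bigU (X : pseudoPMetricType R) (mu : {measure set (borel X) -> \bar R})
  (s : seq (set X)) :
  (forall U, U \in s -> measurable (U : set (borel X)) /\ mu U = 0) ->
  measurable (\big[setU/set0]_(U <- s) U : set (borel X)) /\
  mu (\big[setU/set0]_(U <- s) U) = 0.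
Proof.
elim: s => [|U s IH] H; first by rewrite big_nil; split => //; exact: measure0.
rewrite big_cons.
have [mU U0] := H U (mem_head _ _).
have [ms s0] : measurable (\big[setU/set0]_(U <- s) U : set (borel X)) /\
  mu (\big[setU/set0]_(U <- s) U) = 0.
  by apply: IH => V Vs; apply: H; rewrite in_cons Vs orbT.
split; first exact: measurableU.
apply/eqP; rewrite eq_le measure_ge0 andbT.
apply: le_trans (measureU2 _ mU ms) _; exact: addle0 U0 s0.
Qed.

Lemma compact_null (X : pseudoPMetricType R) (mu : {measure set (borel X) -> \bar R})
  (K : set X) : compact K -> (forall x, K x -> ~ Defs.support mu x) ->
  exists V : set X, [/\ open V, K `<=` V & mu V = 0].
Proof.
move=> cK Kns.
pose D := [set U : set X | open U /\ mu U = 0].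
have cov : K `<=` cover D id.
  move=> x Kx.
  case: (pselect (exists U, [/\ open U, U x & ~ (0 < mu U)])) => [[U [oU Ux nz]]|nE].
    exists U => //; split => //; apply/eqP; rewrite eq_le measure_ge0 andbT.
    by rewrite leNgt; apply/negP.
  exfalso; apply: (Kns x Kx) => U oU Ux; apply: contrapT => nz; apply: nE; exists U.
    by split.
rewrite compact_cover in cK.
have [D' D'D KD'] := cK _ D id (fun i Di => Di.1) cov.
eexists; split; [|exact: KD'|].
  by apply: bigcup_open => i /= iD'; have := D'D i iD'; rewrite inE => -[].
rewrite /cover bigcup_fset; apply: (null_bigU _).2 => U.
move=> UD'.
have := D'D U UD'; rewrite inE => -[oU U0]; split => //; exact: open_meas.
Qed.

End meas.

Section meas2.
Context {R : realType} (X1 X2 : pseudoPMetricType R) (h : X1 -> X2).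
Hypotheses (cX1 : compact [set: X1]) (hX2 : hausdorff_space X2) (hc : continuous h).
Local Open Scope ereal_scope.

Lemma supp_push (mu : {measure set (borel X1) -> \bar R}) :
  Defs.support (push h mu) `<=` h @` Defs.support mu.
Proof.
move=> y sy; apply: contrapT => nK.
have cS : compact (Defs.support mu) :=
  subclosed_compact (support_closed (mu:=mu)) cX1 (@subsetT _ _).
have cK : compact (h @` Defs.support mu) :=
  continuous_compact (continuous_subspaceT hc) cS.
have oK : open (~` (h @` Defs.support mu)) := closed_openC (compact_closed hX2 cK).
have /nbhs_ballP [r r0 Hr] := open_nbhs_nbhs (conj oK nK).
have r20 : (0 < r / 2)%R by rewrite divr_gt0.
pose C := h @^-1` closure (ball y (r/2)).
have cC : closed C := (continuous_closedP h).1 hc _ (@closed_closure _ _).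
have cpC : compact C := subclosed_compact cC cX1 (@subsetT _ _).
have [V [oV CV V0]] : exists V : set X1, [/\ open V, C `<=` V & mu V = 0].
  apply: compact_null cpC _ => x Cx Sx.
  apply: (Hr (h x)); last by exists x.
  have [w [bw bw']] := Cx (ball (h x) (r/2)) (nbhsx_ballx _ _ r20).
  exact: ball_split bw (ball_sym bw').
pose U := interior (ball y (r/2)).
have oU : open U := @open_interior _ _.
have Uy : U y := nbhsx_ballx y (r/2) r20.
have := sy U oU Uy; rewrite /push.
have : mu (h @^-1` U) <= mu V.
  apply: le_measure; rewrite ?inE.
  - by apply: (meas_pre hc); apply: open_meas.
  - exact: open_meas.
  - by move=> x /interior_subset Ux; apply: CV; apply: subset_closure.
by move=> le lt; have := lt_le_trans lt le; rewrite V0 ltxx.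
Qed.

Lemma trac4_push (mu0 : {measure set (borel X1) -> \bar R}) (k : nat)
  (mus : 'I_k -> {measure set (borel X1) -> \bar R}) :
  almost_one_to_one h mu0 -> TRAC4 mu0 (fun i => mus i) ->
  TRAC4 (push h mu0) (fun i => push h (mus i)).
Proof.
move=> [A0 [mA0 A00 sub]] T4 i j ij; rewrite /push.
set P := h @^-1` _.
have mS (m : {measure set (borel X1) -> \bar R}) :
  measurable (Defs.support m : set (borel X1)) := closed_meas (support_closed (mu:=m)).
have mP : measurable (P : set (borel X1)).
  apply: (meas_pre hc); apply: closed_meas; apply: closedI; exact: support_closed.
have mI : measurable (Defs.support (mus i) `&` Defs.support (mus j) : set (borel X1)).
  exact: measurableI.
have PS : P `<=` (Defs.support (mus i) `&` Defs.support (mus j)) `|` A0.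
  move=> x [/supp_push [s Ss hs] /supp_push [t St ht]].
  case: (pselect (h @^-1` [set h x] = [set x])) => [fib|nfib]; last first.
    by right; apply: sub.
  have sx : s = x by have : (h @^-1` [set h x]) s := hs; rewrite fib.
  have tx : t = x by have : (h @^-1` [set h x]) t := ht; rewrite fib.
  by left; split; [rewrite -sx|rewrite -tx].
apply/eqP; rewrite eq_le measure_ge0 andbT.
have L1 : mu0 P <= mu0 ((Defs.support (mus i) `&` Defs.support (mus j)) `|` A0).
  by apply: le_measure; rewrite ?inE //; exact: measurableU.
apply: le_trans L1 _.
apply: le_trans (measureU2 _ mI mA0) _.
exact: addle0 (T4 i j ij) A00.
Qed.

End meas2.
Section t.
Context {R : realType}.
Lemma cont_mfunR (X : pseudoPMetricType R) (u : X -> R) : continuous u ->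
  measurable_fun [set: borel X] u.
Proof.
move=> uc.
apply: (@measurability _ _ (borel X) R setT u (@measurable_realfun.RGenInftyO.G R)).
  exact: measurable_realfun.RGenInftyO.measurableE.
move=> _ [B [x ->] <-]; rewrite setTI; apply: open_meas.
apply: (continuousP _).1 uc _ _.
exact: interval_open.
Qed.
End t.
Section t2.
Context {R : realType}.
Local Open Scope ereal_scope.
Lemma mean_push (X1 X2 : pseudoPMetricType R) (h : X1 -> X2) (hc : continuous h)
  (cX1 : compact [set: X1])
  (mu : {measure set (borel X1) -> \bar R}) (fin : mu [set: X1] < +oo)
  (u : X2 -> R) (uc : continuous u) :
  mean (push h mu) u = mean mu (u \o h).
Proof.
rewrite /mean.
have mf : measurable_fun [set: borel X2] (fun x => (u x)%:E).
  by apply/measurable_EFinP; exact: cont_mfunR.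
have uhc : continuous (u \o h) by move=> x; apply: continuous_comp; [exact: hc|exact: uc].
have intf : mu.-integrable (h @^-1` [set: X2]) ((fun x => (u x)%:E) \o h).
  rewrite preimage_setT; apply: measurable_bounded_integrable => //.
    exact: cont_mfunR.
  have := @compact_bounded R R^o _ (continuous_compact (continuous_subspaceT uhc) cX1).
  move=> H; rewrite /bounded_near; near=> M => x _.
  suff : globally [set (u \o h) x | x in [set: X1]] [set y : R | (`|y| <= M)%R].
    by apply; exists x.
  by near: M.
have := integral_pushforward (cont_mfun hc) mf intf measurableT.
rewrite preimage_setT => <-.
by [].
Unshelve. all: by end_near.
Qed.
End t2.
Section reg.
Context {R : realType} (X : pseudoPMetricType R)
  (mu : {measure set (borel X) -> \bar R}).
Hypothesis fin : (mu [set: X] < +oo)%E.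
Local Open Scope ereal_scope.

Lemma mu_fin (A : set X) : measurable (A : set (borel X)) -> mu A < +oo.
Proof. move=> mA; apply: le_lt_trans fin; apply: le_measure; rewrite ?inE //. Qed.

Lemma small_tail (G : nat -> set X) : (forall i, measurable (G i : set (borel X))) ->
  (forall n m, (n <= m)%N -> G m `<=` G n) -> \bigcap_n G n = set0 ->
  forall e : R, (0 < e)%R -> exists N, mu (G N) < e%:E.
Proof.
move=> mG Gdec G0 e e0.
have mc : measurable (\bigcap_n G n : set (borel X)) by rewrite G0; exact: measurable0.
have hom : {homo G : n m / (n <= m)%N >-> (m <= n)%O}.
  by move=> n m nm; apply/subsetPset; apply: Gdec.
have := nonincreasing_cvg_mu (mu_fin (mG 0%N)) mG mc hom.
move=> /(_ [set y | y < e%:E]) [].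
  rewrite G0 measure0; apply: open_nbhs_nbhs; split.
    exact: open_ereal_lt_ereal.
  by rewrite /= lte_fin.
move=> N _ HN; exists N; exact: (HN N (leqnn N)).
Qed.

Definition good (A : set X) := measurable (A : set (borel X)) /\
  forall e : R, (0 < e)%R -> exists F U : set X,
    [/\ closed F, open U, F `<=` A, A `<=` U & mu (U `\` F) < e%:E].

Lemma good_compl A : good A -> good (~` A).
Proof.
move=> [mA HA]; split; first exact: measurableC.
move=> e e0; have [F [U [cF oU FA AU HFU]]] := HA e e0.
exists (~` U), (~` F); split.
- exact: open_closedC.
- exact: closed_openC.
- by apply: subsetC.
- by apply: subsetC.
- by rewrite setDE setCK setIC -setDE.
Qed.

Lemma good_open U : open U -> good U.
Proof.
move=> oU; split; first exact: open_meas.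
move=> e e0.
pose S n := [set x | ball x (n.+1%:R^-1) `<=` U].
pose F n := closure (S n).
have FU n : F n `<=` U.
  move=> x clx.
  have hr : (0 < (n.+1%:R^-1 : R))%R by rewrite invr_gt0 ltr0n.
  have r0 : (0 < (n.+1%:R^-1 : R) / 2)%R by rewrite divr_gt0.
  have [y [Sy bxy]] := clx _ (nbhsx_ballx _ _ r0).
  apply: Sy; apply: (le_ball (half_le hr)).
  exact: ball_sym.
have Finc n m : (n <= m)%N -> F n `<=` F m.
  move=> nm; apply: closure_subset => x Sx y bxy; apply: Sx.
  exact: le_ball (invS_le (R:=R) nm) _ bxy.
have cF n : closed (F n) by exact: closed_closure.
have mF n : measurable (F n : set (borel X)) by apply: closed_meas.
pose G n := U `\` F n.
have mG n : measurable (G n : set (borel X)) by apply: measurableD => //; exact: open_meas.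
have Gdec n m : (n <= m)%N -> G m `<=` G n.
  by move=> nm x [Ux nFx]; split => // Fx; apply: nFx; apply: Finc nm _ Fx.
have G0 : \bigcap_n G n = set0.
  apply/seteqP; split => // x Gx.
  have /nbhs_ballP [r r0 Hr] := open_nbhs_nbhs (conj oU (Gx 0%N Logic.I).1).
  near \oo => n.
  have [_ nFx] := Gx n Logic.I; apply: nFx; apply: subset_closure.
  move=> y bxy; apply: Hr; apply: le_ball bxy; apply: ltW.
  by near: n; exact: (near_infty_natSinv_lt (PosNum r0)).
have [N HN] := small_tail mG Gdec G0 e0.
by exists (F N), U; split => //.
Unshelve. all: by end_near.
Qed.

Lemma good_bigcup (A : nat -> set X) : (forall n, good (A n)) -> good (\bigcup_n A n).
Proof.
move=> gA; split; first by apply: bigcupT_measurable => n; exact: (gA n).1.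
move=> e e0.
have e20 : (0 < e / 2)%R by rewrite divr_gt0.
pose eps n := ((e / 2) / (2 ^ n.+1)%:R)%R.
have eps0 n : (0 < eps n)%R by rewrite divr_gt0 // ltr0n expn_gt0.
have /choice [FU HFU] : forall n, exists p : set X * set X,
    [/\ closed p.1, open p.2, p.1 `<=` A n, A n `<=` p.2 &
       mu (p.2 `\` p.1) < (eps n)%:E].
  by move=> n; have [F [U H]] := (gA n).2 _ (eps0 n); exists (F, U).
pose F n := (FU n).1.
pose U n := (FU n).2.
have cFn n : closed (F n) by case: (HFU n).
have oUn n : open (U n) by case: (HFU n).
have FAn n : F n `<=` A n by case: (HFU n).
have AUn n : A n `<=` U n by case: (HFU n).
have mUFn n : mu (U n `\` F n) < (eps n)%:E by case: (HFU n).
have mF n : measurable (F n : set (borel X)) by apply: closed_meas; exact: cFn n.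
have mU n : measurable (U n : set (borel X)) by apply: open_meas; exact: oUn n.
pose FF := \bigcup_n F n.
have mFF : measurable (FF : set (borel X)) by exact: bigcupT_measurable.
pose H N := \bigcup_(i < N) F i.
have cH N : closed (H N).
  by rewrite /H bigcup_mkord; apply: closed_bigsetU => i _; exact: cFn.
have mH N : measurable (H N : set (borel X)) by exact: closed_meas.
pose G N := FF `\` H N.
have mG N : measurable (G N : set (borel X)) by exact: measurableD.
have Gdec n m : (n <= m)%N -> G m `<=` G n.
  move=> nm x [FFx nHx]; split => // -[i /= ilt Fix]; apply: nHx.
  by exists i => //=; apply: leq_trans ilt nm.
have G0 : \bigcap_n G n = set0.
  apply/seteqP; split => // x Gx.
  have [i _ Fix] := (Gx 0%N Logic.I).1.
  by have [_] := Gx i.+1 Logic.I; apply; exists i => /=.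
have [N HN] := small_tail mG Gdec G0 e20.
exists (H N), (\bigcup_n U n); split.
- exact: cH.
- by apply: bigcup_open => n _; exact: oUn n.
- by move=> x [i _ Fix]; exists i => //; apply: FAn.
- by move=> x [i _ Aix]; exists i => //; apply: AUn.
have mUF : measurable (\bigcup_n (U n `\` F n) : set (borel X)).
  by apply: bigcupT_measurable => n; exact: measurableD.
have sub : (\bigcup_n U n) `\` H N `<=` (\bigcup_n (U n `\` F n)) `|` G N.
  move=> x [[n _ Unx] nHx].
  case: (pselect (FF x)) => [FFx|nFFx]; first by right.
  by left; exists n => //; split => // Fnx; apply: nFFx; exists n.
have L1 : mu ((\bigcup_n U n) `\` H N) <= mu ((\bigcup_n (U n `\` F n)) `|` G N).
  apply: le_measure; rewrite ?inE //; last exact: measurableU.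
  by apply: measurableD => //; exact: bigcupT_measurable.
apply: le_lt_trans L1 _.
apply: le_lt_trans (measureU2 _ mUF (mG N)) _.
have L2 : mu (\bigcup_n (U n `\` F n)) <= (e / 2)%:E.
  apply: le_trans (measure_sigma_subadditive _ (fun n => measurableD (mU n) (mF n)) mUF
    (@subset_refl _ _)) _.
  apply: le_trans (epsilon_trick0 xpredT (ltW e20)).
  apply: lee_nneseries; first by move=> n _ _; exact: measure_ge0.
  by move=> n _; exact: ltW (mUFn n).
rewrite [e]splitr EFinD; apply: lee_ltD => //.
rewrite ge0_fin_numE ?measure_ge0 //; apply: le_lt_trans L2 _; exact: ltry.
Qed.

Lemma all_good (A : set X) : measurable (A : set (borel X)) -> good A.
Proof.
move=> mA.
have sg : sigma_algebra [set: X] good.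
  split.
  - by apply: good_open; exact: open0.
  - by move=> B gB; rewrite setTD; exact: good_compl.
  - exact: good_bigcup.
exact: (smallest_sub sg (fun U oU => good_open oU)) mA.
Qed.

Lemma inner_closed (A : set X) : measurable (A : set (borel X)) ->
  forall e : R, (0 < e)%R -> exists F, [/\ closed F, F `<=` A & mu (A `\` F) < e%:E].
Proof.
move=> mA e e0; have [_ H] := all_good mA.
have [F [U [cF oU FA AU HFU]]] := H e e0.
exists F; split => //; apply: le_lt_trans HFU.
apply: le_measure; rewrite ?inE.
- by apply: measurableD => //; exact: closed_meas.
- by apply: measurableD; [exact: open_meas|exact: closed_meas].
- by move=> x [Ax nFx]; split => //; apply: AU.
Qed.

End reg.
Section final.
Context {R : realType} (X1 X2 : pseudoPMetricType R) (f1 : X1 -> X1) (f2 : X2 -> X2)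
  (h : X1 -> X2).
Hypotheses (cX1 : compact [set: X1]) (hX2 : hausdorff_space X2)
  (f1c : continuous f1) (f2c : continuous f2) (hc : continuous h)
  (hcomm : h \o f1 = f2 \o h) (hsurj : forall y, exists x, h x = y).
Local Open Scope ereal_scope.

Lemma pre_comm (A : set X2) : h @^-1` (f2 @^-1` A) = f1 @^-1` (h @^-1` A).
Proof.
apply/seteqP; split => x /=;
  by have -> : h (f1 x) = f2 (h x) by have := congr1 (fun g => g x) hcomm.
Qed.

Lemma ergodic_push (mu : set (borel X1) -> \bar R) :
  ergodic_measure f1 mu -> ergodic_measure f2 (push h mu).
Proof.
move=> [pr inv erg]; split.
- by rewrite /probability_measure /push preimage_setT.
- move=> A mA; rewrite /push pre_comm; apply: inv; exact: meas_pre.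
- move=> A mA fA; apply: erg; first exact: meas_pre.
  by rewrite -pre_comm fA.
Qed.

Lemma generic_push (mu : {measure set (borel X1) -> \bar R}) x :
  mu [set: X1] < +oo -> generic f1 mu x -> generic f2 (push h mu) (h x).
Proof.
move=> fin g u uc.
rewrite (mean_push hc cX1 fin uc).
have uhc : continuous (u \o h) by move=> y; apply: continuous_comp; [exact: hc|exact: uc].
have := g _ uhc.
have -> : (fun n : nat => (n%:R^-1 * \sum_(i < n) (u \o h) (iter i f1 x))%R) =
          (fun n : nat => (n%:R^-1 * \sum_(i < n) u (iter i f2 (h x)))%R).
  apply: funext => n; congr (_ * _)%R; apply: eq_bigr => i _.
  by rewrite /= (iter_comm hcomm).
by [].
Qed.

Lemma background_push (mu0 : {measure set (borel X1) -> \bar R}) :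
  background_measure mu0 -> background_measure (push h mu0).
Proof.
move=> [pr full]; split; first by rewrite /probability_measure /push preimage_setT.
move=> U oU [y Uy]; rewrite /push; apply: full.
  exact: (continuousP _).1 hc _ oU.
by have [x hx] := hsurj y; exists x; rewrite /= hx.
Qed.

Lemma trac2_push (mu0 : {measure set (borel X1) -> \bar R}) (k : nat)
  (mus : 'I_k -> {measure set (borel X1) -> \bar R}) :
  background_measure mu0 -> TRAC2 f1 mu0 (fun i => mus i) ->
  TRAC2 f2 (push h mu0) (fun i => push h (mus i)).
Proof.
move=> [pr0 _] [erg [A1 [mA1 A10 N1A1]]]; split.
  by move=> i; apply: ergodic_push.
have fin0 : mu0 [set: X1] < +oo by rewrite pr0 ltry.
have fini i : mus i [set: X1] < +oo.
  by have [pr _ _] := erg i; rewrite pr ltry.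
pose M := ~` A1.
have mM : measurable (M : set (borel X1)) by exact: measurableC.
pose e n : R := (n.+1%:R^-1)%R.
have e0 n : (0 < e n)%R by rewrite invr_gt0 ltr0n.
have /choice [F HF] : forall n, exists F : set X1,
    [/\ closed F, F `<=` M & mu0 (M `\` F) < (e n)%:E].
  move=> n; have := inner_closed fin0 mM (e0 n). exact.
have cF n : closed (F n) by case: (HF n).
have FM n : F n `<=` M by case: (HF n).
have mMF n : mu0 (M `\` F n) < (e n)%:E by case: (HF n).
have cK n : closed (h @` F n).
  apply: compact_closed hX2 _; apply: continuous_compact (continuous_subspaceT hc) _.
  exact: subclosed_compact (cF n) cX1 (@subsetT _ _).
pose A2 := ~` \bigcup_n (h @` F n).
exists A2; split.
- by apply: measurableC; apply: bigcupT_measurable => n; exact: closed_meas.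
- rewrite /push; apply/eqP; rewrite eq_le measure_ge0 andbT.
  have mA2 : measurable (h @^-1` A2 : set (borel X1)).
    apply: (meas_pre hc); apply: measurableC; apply: bigcupT_measurable => n.
    exact: closed_meas.
  apply/lee_addgt0Pr => eps eps0; rewrite add0e.
  near \oo => n.
  have mMFn : measurable (M `\` F n : set (borel X1)).
    by apply: measurableD => //; exact: closed_meas.
  have sub : h @^-1` A2 `<=` A1 `|` (M `\` F n).
    move=> x A2x; case: (pselect (A1 x)) => [A1x|nA1x]; first by left.
    by right; split => // Fx; apply: A2x; exists n => //; exists x.
  have L1 : mu0 (h @^-1` A2) <= mu0 (A1 `|` (M `\` F n)).
    by apply: le_measure; rewrite ?inE //; exact: measurableU.
  apply: le_trans L1 _; apply: le_trans (measureU2 _ mA1 mMFn) _.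
  apply: zero_addle A10 _; apply: ltW; apply: lt_le_trans (mMF n) _.
  rewrite lee_fin; apply: ltW.
  by near: n; exact: (near_infty_natSinv_lt (PosNum eps0)).
- move=> y Ny [n _ [x Fx hxy]]; apply: Ny.
  have nN1 : ~ (~` [set x | exists i, generic f1 (mus i) x]) x.
    by move=> /N1A1; apply: FM Fx.
  have [i gi] : exists i, generic f1 (mus i) x by apply: contrapT => H; apply: nN1.
  by exists i; rewrite -hxy; apply: generic_push.
Unshelve. all: by end_near.
Qed.

End final.

Theorem theorem2p7 (R : realType) (X1 X2 : pseudoPMetricType R)
    (f1 : X1 -> X1) (f2 : X2 -> X2) (h : X1 -> X2)
    (mu0 : {measure set (borel X1) -> \bar R})
    (k : nat) (mus : 'I_k -> {measure set (borel X1) -> \bar R}) :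
  dyn_system f1 -> dyn_system f2 ->
  continuous h -> (forall y : X2, exists x : X1, h x = y) -> h \o f1 = f2 \o h ->
  background_measure mu0 ->
  TRAC1 f1 -> TRAC2 f1 mu0 (fun i => mus i) ->
  [/\ background_measure (push h mu0),
      TRAC1 f2,
      TRAC2 f2 (push h mu0) (fun i => push h (mus i)),
      (almost_open h -> TRAC3 f1 (fun i => mus i) ->
         TRAC3 f2 (fun i => push h (mus i))) &
      (almost_open h -> TRAC3 f1 (fun i => mus i) ->
       almost_one_to_one h mu0 -> TRAC4 mu0 (fun i => mus i) ->
         TRAC4 (push h mu0) (fun i => push h (mus i)))].
Proof.
move=> [hX1 cX1 f1c] [hX2 cX2 f2c] hc hsurj hcomm bg T1 T2; split.
- by apply: background_push.
- exact: (trac1_push cX1 f1c f2c hc hcomm hsurj).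
- exact: (trac2_push cX1 hX2 hc hcomm bg T2).
- move=> ao T3 i; have [B1 [[x1 [x1CR ->]] vis sub]] := T3 i.
  exists (cls f2 (h x1)); split.
  + exact: (basic_push cX1 hc hcomm x1CR).1.
  + exact: (visible_push cX1 hX2 hc hcomm ao vis).
  + move=> y /(supp_push cX1 hX2 hc) [s Ss <-].
    by apply: (basic_push cX1 hc hcomm x1CR).2; exists s => //; apply: sub.
- by move=> _ _ a1 T4; exact: trac4_push.
Qed.
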